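(* Assume the new-symbol weights are of product form $w^t_i=u(i)\,v(m_t)$. Let $x_{1:n}\in\mathcal X^n$ ($n\ge1$) have used alphabet size $m$ and counts $n_j$. Then the redundancy of the adaptive model $S^{\vec\beta^*}$ satisfies $$R^{\vec\beta^*}_S(x_{1:n}) \le \mathrm{CL}_w(\mathcal A) - (m-1)\ln m + \sum_{j\in\mathcal A}\tfrac12\ln n_j - \tfrac12\ln n + \tfrac32\,m\ln\ln\frac{2n}{m} + 2.33\,m + 0.86 .$$
   Context: Let $\mathcal X$ be a finite base alphabet. For $x_{1:n}\in\mathcal X^n$, let $n_i$ be the number of occurrences of $i$ in $x_{1:n}$, $\mathcal A=\{x_1,\dots,x_n\}$, $m=|\mathcal A|$. For $0\le t\le n$ let $\mathcal A_t=\{x_1,\dots,x_t\}$ ($\mathcal A_0=\emptyset$), $m_t=|\mathcal A_t|$, $n^t_i$ the number of occurrences of $i$ in $x_{1:t}$. Product-form weights: $u:\mathcal X\to(0,\infty)$ and $v:\{0,1,\dots\}\to(0,\infty)$ such that $w^t_i:=u(i)v(m_t)$ satisfies $\sum_{k\in\mathcal X\setminus\mathcal A_t}w^t_k\le1$ for all $t$. Adaptive model: $\beta^*_t:=m_t/\ln\frac{t+1}{m_t}$ for $t\ge1$, and $\beta^*_0\in(0,\infty)$ arbitrary; $S^{\vec\beta^*}(x_{t+1}=i\mid x_{1:t})=n^t_i/(t+\beta^*_t)$ if $n^t_i>0$ and $\beta^*_t w^t_i/(t+\beta^*_t)$ if $n^t_i=0$; $S^{\vec\beta^*}(x_{1:n})=\prod_{t=0}^{n-1}S^{\vec\beta^*}(x_{t+1}\mid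 x_{1:t})$. $\mathrm{CL}_w(\mathcal A):=\sum_{t\in\{0,\dots,n-1\}:\,x_{t+1}\notin\mathcal A_t}\ln(1/w^t_{x_{t+1}})$. Redundancy $R^{\vec\beta^*}_S(x_{1:n}):=\ln\big(n^{-n}\prod_{j\in\mathcal A}n_j^{n_j}\big)-\ln S^{\vec\beta^*}(x_{1:n})$. Natural logarithms. *)

(* Defs.v *)
From mathcomp Require Import all_boot.
From Stdlib Require Import Reals.
Set Implicit Arguments. Unset Strict Implicit. Unset Printing Implicit Defensive.
Open Scope R_scope.

Definition sumR (l : seq R) : R := foldr Rplus 0 l.
Definition prodR (l : seq R) : R := foldr Rmult 1 l.

Section Model.
Variable X : finType.

(* prefix_pairs [::] s = [:: (x_{1:0}, x_1); (x_{1:1}, x_2); ...; (x_{1:n-1}, x_n)] *)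
Fixpoint prefix_pairs (pre rest : seq X) : seq (seq X * X) :=
  match rest with
  | [::] => [::]
  | x :: r => (pre, x) :: prefix_pairs (rcons pre x) r
  end.

Definition msize (pre : seq X) : nat := size (undup pre).

Definition cnt (pre : seq X) (i : X) : nat := count_mem i pre.

Definition weight (u : X -> R) (v : nat -> R) (pre : seq X) (i : X) : R :=
  u i * v (msize pre).

Definition beta_star (beta0 : R) (pre : seq X) : R :=
  match size pre with
  | 0%nat => beta0
  | t => INR (msize pre) / ln (INR t.+1 / INR (msize pre))
  end.

Definition S_cond (u : X -> R) (v : nat -> R) (beta0 : R) (pre : seq X) (i : X) : R :=
  let t := INR (size pre) in
  let b := beta_star beta0 pre in
  if leq 1 (cnt pre i) then INR (cnt pre i) / (t + b)
  else b * weight u v pre i / (t + b).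

Definition S_prob (u : X -> R) (v : nat -> R) (beta0 : R) (s : seq X) : R :=
  prodR [seq S_cond u v beta0 p.1 p.2 | p <- prefix_pairs [::] s].

Definition CL (u : X -> R) (v : nat -> R) (s : seq X) : R :=
  sumR [seq ln (/ weight u v p.1 p.2) | p <- prefix_pairs [::] s & p.2 \notin p.1].

Definition redundancy (u : X -> R) (v : nat -> R) (beta0 : R) (s : seq X) : R :=
  ln (prodR [seq INR (cnt s j) ^ (cnt s j) | j <- undup s] / INR (size s) ^ (size s))
  - ln (S_prob u v beta0 s).

End Model.

(* Main.v *)
Require Import Defs.
From HB Require Import structures.
From mathcomp Require Import all_boot.
From Stdlib Require Import Reals Lra Psatz.
From Coquelicot Require Import Coquelicot.
Open Scope R_scope.

Lemma ln_le_sub1 x : 0 < x -> ln x <= x - 1.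
Proof. move=> Hx. have := exp_ineq1_le (ln x). rewrite exp_ln //. lra. Qed.

Lemma ln_ge_1sub x : 0 < x -> 1 - / x <= ln x.
Proof.
move=> Hx. have Hi : 0 < / x by apply Rinv_0_lt_compat.
have := ln_le_sub1 (/ x) Hi. rewrite ln_Rinv //. lra.
Qed.

Lemma ln1p_le y : -1 < y -> ln (1 + y) <= y.
Proof. move=> Hy. have := ln_le_sub1 (1+y) ltac:(lra). lra. Qed.

Lemma ln1p_ge2 y : 0 <= y -> 2 * y / (2 + y) <= ln (1 + y).
Proof.
move=> Hy. case: (Req_dec y 0) => [->|Hy0].
  rewrite !Rplus_0_r ln_1. lra.
have Hlt : 0 < y by lra.
set f := fun z => ln (1 + z) - 2 * z / (2 + z).
have Hd : forall c, 0 <= c <= y -> derivable_pt_lim f c (/(1+c) - 4/(2+c)^2).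
  move=> c Hc. apply is_derive_Reals. rewrite /f. auto_derive. lra. field. lra.
have [c [Hc1 Hc2]] := MVT_cor2 f (fun c => /(1+c) - 4/(2+c)^2) 0 y Hlt Hd.
have Hf0 : f 0 = 0 by rewrite /f !Rplus_0_r ln_1; field.
have Hpos : 0 <= / (1 + c) - 4 / (2 + c) ^ 2.
  have -> : / (1 + c) - 4 / (2 + c) ^ 2 = c^2 / ((1+c) * (2+c)^2) by field; lra.
  apply Rcomplements.Rdiv_le_0_compat. nra. nra.
have : 0 <= f y by nra.
rewrite /f. lra.
Qed.

Lemma ln1p_le3 y : 0 <= y -> ln (1 + y) <= y - y^2/2 + y^3/3.
Proof.
move=> Hy. case: (Req_dec y 0) => [->|Hy0].
  rewrite !Rplus_0_r ln_1. lra.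
have Hlt : 0 < y by lra.
set f := fun z => z - z^2/2 + z^3/3 - ln (1 + z).
have Hd : forall c, 0 <= c <= y -> derivable_pt_lim f c (1 - c + c^2 - /(1+c)).
  move=> c Hc. apply is_derive_Reals. rewrite /f. auto_derive. lra. field. lra.
have [c [Hc1 Hc2]] := MVT_cor2 f _ 0 y Hlt Hd.
have Hf0 : f 0 = 0 by rewrite /f !Rplus_0_r ln_1; field.
have Hpos : 0 <= 1 - c + c^2 - /(1+c).
  have -> : 1 - c + c^2 - /(1+c) = c^3 / (1+c) by field; lra.
  apply Rcomplements.Rdiv_le_0_compat. nra. nra.
have : 0 <= f y by nra.
rewrite /f. lra.
Qed.

Lemma ln_succ k : 0 < k -> ln (k + 1) = ln k + ln (1 + / k).
Proof.
move=> Hk. rewrite -ln_mult; [|lra| have := Rinv_0_lt_compat k Hk; lra].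
f_equal. field. lra.
Qed.

Lemma ln2_sum : ln 2 = ln (1 + /8) + ln (1 + /9) + ln (1 + /10) + ln (1 + /11)
  + ln (1 + /12) + ln (1 + /13) + ln (1 + /14) + ln (1 + /15).
Proof.
have h16 : ln 16 = ln 2 + ln 8 by rewrite -ln_mult; [f_equal; lra|lra|lra].
have e8 := ln_succ 8 ltac:(lra). have e9 := ln_succ 9 ltac:(lra).
have e10 := ln_succ 10 ltac:(lra). have e11 := ln_succ 11 ltac:(lra).
have e12 := ln_succ 12 ltac:(lra). have e13 := ln_succ 13 ltac:(lra).
have e14 := ln_succ 14 ltac:(lra). have e15 := ln_succ 15 ltac:(lra).
replace (8+1) with 9 in e8 by lra. replace (9+1) with 10 in e9 by lra.
replace (10+1) with 11 in e10 by lra. replace (11+1) with 12 in e11 by lra.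
replace (12+1) with 13 in e12 by lra. replace (13+1) with 14 in e13 by lra.
replace (14+1) with 15 in e14 by lra. replace (15+1) with 16 in e15 by lra.
lra.
Qed.

Lemma ln2_lo : 6912/10000 <= ln 2.
Proof.
rewrite ln2_sum.
have H k : 0 < k -> 2 / (2*k+1) <= ln (1 + / k).
  move=> Hk. have := ln1p_ge2 (/k) ltac:(have := Rinv_0_lt_compat k Hk; lra).
  have -> : 2 * / k / (2 + / k) = 2 / (2*k+1) by field; lra. done.
have := H 8 ltac:(lra). have := H 9 ltac:(lra). have := H 10 ltac:(lra).
have := H 11 ltac:(lra). have := H 12 ltac:(lra). have := H 13 ltac:(lra).
have := H 14 ltac:(lra). have := H 15 ltac:(lra). lra.
Qed.

Lemma ln2_hi : ln 2 <= 6935/10000.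
Proof.
rewrite ln2_sum.
have H k : 0 < k -> ln (1 + / k) <= /k - /(2*k^2) + /(3*k^3).
  move=> Hk. have := ln1p_le3 (/k) ltac:(have := Rinv_0_lt_compat k Hk; lra).
  have -> : / k - (/ k) ^ 2 / 2 + (/ k) ^ 3 / 3 = /k - /(2*k^2) + /(3*k^3) by field; lra. done.
have := H 8 ltac:(lra). have := H 9 ltac:(lra). have := H 10 ltac:(lra).
have := H 11 ltac:(lra). have := H 12 ltac:(lra). have := H 13 ltac:(lra).
have := H 14 ltac:(lra). have := H 15 ltac:(lra). lra.
Qed.

Lemma ln7_hi : ln 7 <= 3 * ln 2 - 2/15.
Proof.
have h8 : ln 8 = 3 * ln 2.
  have -> : 8 = 2^3 by lra. rewrite ln_pow; [simpl; lra | lra].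
have e7 := ln_succ 7 ltac:(lra). replace (7+1) with 8 in e7 by lra.
have := ln1p_ge2 (/7) ltac:(lra).
have -> : 2 * / 7 / (2 + / 7) = 2/15 by field. lra.
Qed.

Lemma ln7_lo : 3 * ln 2 - 1/7 <= ln 7.
Proof.
have h8 : ln 8 = 3 * ln 2.
  have -> : 8 = 2^3 by lra. rewrite ln_pow; [simpl; lra | lra].
have e7 := ln_succ 7 ltac:(lra). replace (7+1) with 8 in e7 by lra.
have := ln1p_le (/7) ltac:(lra). lra.
Qed.

Lemma ln14_eq : ln 14 = ln 2 + ln 7.
Proof. rewrite -ln_mult; [f_equal; lra|lra|lra]. Qed.

Lemma ln7_ge_2ln2 : 14 * ln 2 <= 5 * ln 7.
Proof.
have a : ln (2^14) = 14 * ln 2 by rewrite ln_pow; [simpl; lra|lra].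
have b : ln (7^5) = 5 * ln 7 by rewrite ln_pow; [simpl; lra|lra].
rewrite -a -b. apply Rcomplements.ln_le. apply pow_lt; lra.
simpl; lra.
Qed.

Lemma ln_interp a b x : 0 < a -> a <= x <= b ->
  (b - x) * ln a + (x - a) * ln b <= (b - a) * ln x.
Proof.
move=> Ha [Hax Hxb]. have Hx : 0 < x by lra.
have h1 : ln a - ln x <= a / x - 1.
  have := ln_le_sub1 (a / x) ltac:(apply Rdiv_lt_0_compat; lra).
  rewrite Rcomplements.ln_div //; lra.
have h2 : ln b - ln x <= b / x - 1.
  have := ln_le_sub1 (b / x) ltac:(apply Rdiv_lt_0_compat; lra).
  rewrite Rcomplements.ln_div //; lra.
have h3 : (b - x) * (ln a - ln x) <= (b - x) * (a / x - 1) by apply Rmult_le_compat_l; lra.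
have h4 : (x - a) * (ln b - ln x) <= (x - a) * (b / x - 1) by apply Rmult_le_compat_l; lra.
have h5 : (b - x) * (a / x - 1) + (x - a) * (b / x - 1) = 0 by field; lra.
lra.
Qed.

Lemma lnm_bound m : 1 <= m -> ln m <= m / 2 - 3/10.
Proof.
move=> Hm. have := ln_le_sub1 (m/2) ltac:(lra).
rewrite Rcomplements.ln_div; [|lra|lra]. have := ln2_hi. lra.
Qed.

Lemma budget1D m th : 1 <= m -> 0 <= th <= 6 ->
  m * (1 + ln (1 + th)) + 1/2 <=
  3/2 * m * ln (ln (2 + 2 * th)) + 1955/1000 * m + 485/1000 - /2 * ln m.
Proof.
move=> Hm Hth.
have la := ln2_lo. have lb := ln2_hi. have l7 := ln7_hi. have l7' := ln7_lo.
set a := ln 2. set b := ln 14. set x := ln (2 + 2 * th).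
have hb : b = a + ln 7 by rewrite /b /a ln14_eq.
have hx : x = a + ln (1 + th).
  rewrite /x /a -ln_mult; [f_equal; lra|lra|lra].
have hxa : a <= x.
  rewrite /x /a. apply Rcomplements.ln_le; lra.
have hxb : x <= b.
  rewrite /x /b. apply Rcomplements.ln_le; lra.
have ea : a = ln 2 by []. have eb : b = ln 14 by []. clearbody a b x.
have hpa : 0 < a by lra.
have hia := @ln_interp a b x hpa (conj hxa hxb).
have hlna : - 47/100 <= ln a.
  have := ln_ge_1sub a hpa.
  have : / a <= / (6912/10000) by apply Rinv_le_contravar; lra.
  have : / (6912/10000) = 10000/6912 by field.
  lra.
have hb26 : 26/10 <= b by lra.
have hlnb : 2 * (b - 1) / (b + 1) <= ln b.
  have := ln1p_ge2 (b - 1) ltac:(lra). have -> : 1 + (b - 1) = b by ring. by have -> : 2 + (b - 1) = b + 1 by ring.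
have hlnb' : 2 * (16/10) / (36/10) <= 2 * (b - 1) / (b + 1).
  apply (Rmult_le_reg_r ((36/10) * (b + 1))). nra.
  have -> : 2 * (b - 1) / (b + 1) * (36 / 10 * (b + 1)) = 2 * (b-1) * (36/10) by field; lra.
  nra.
have phi_b : b - a - 3/2 * ln b <= 705/1000 by lra.
have phi_a : - (3/2) * ln a <= 705/1000 by lra.
have key : x - a - 3/2 * ln x <= 705/1000.
  have hba : 0 < b - a by lra.
  apply (Rmult_le_reg_l (b - a)) => //.
  have e1 : (b - x) * (- (3/2) * ln a) <= (b - x) * (705/1000) by apply Rmult_le_compat_l; lra.
  have e2 : (x - a) * (b - a - 3/2 * ln b) <= (x - a) * (705/1000) by apply Rmult_le_compat_l; lra.
  nra.
have hm := lnm_bound m Hm.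
have key2 : m * (x - a - 3/2 * ln x) <= m * (705/1000) by apply Rmult_le_compat_l; lra.
rewrite hx in key2 *. nra.
Qed.

Set Implicit Arguments. Unset Strict Implicit.

Fixpoint lf (c : nat) : R := match c with 0%nat => 0 | S c' => lf c' + ln (INR c) end.
Definition bb (c : nat) : R := lf c - INR c * ln (INR c) + INR c - / 2 * ln (INR c).

Lemma INR_ge1 c : (1 <= c)%nat -> 1 <= INR c.
Proof. move=> H. apply (le_INR 1 c). by apply/leP. Qed.

Lemma bb_step c : (1 <= c)%nat ->
  bb c.+1 - bb c = 1 - (INR c + /2) * ln (1 + / INR c).
Proof.
move=> Hc. have H1 := INR_ge1 Hc.
have e := ln_succ (INR c) ltac:(lra).
rewrite /bb /=. rewrite -/(INR c.+1) S_INR in e *. rewrite e. ring.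
Qed.

Lemma e_ge1 c : (1 <= c)%nat -> 1 <= (INR c + /2) * ln (1 + / INR c).
Proof.
move=> Hc. have H1 := INR_ge1 Hc.
have hy : 0 <= / INR c by have := Rinv_0_lt_compat (INR c) ltac:(lra); lra.
have := ln1p_ge2 (/ INR c) hy.
have -> : 2 * / INR c / (2 + / INR c) = / (INR c + /2) by field; repeat split; nra.
move=> h. have hp : 0 < INR c + /2 by lra.
apply (Rmult_le_reg_l (/ (INR c + /2))). by apply Rinv_0_lt_compat.
rewrite -Rmult_assoc Rinv_l; lra.
Qed.

Lemma e_le c : (1 <= c)%nat ->
  (INR c + /2) * ln (1 + / INR c) <= 1 + 3/16 * (/ (INR c - /2) - / (INR c + /2)).
Proof.
move=> Hc. have H1 := INR_ge1 Hc. remember (INR c) as x eqn:Ex.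
have hy : 0 <= / x by have := Rinv_0_lt_compat x ltac:(lra); lra.
have := ln1p_le3 (/ x) hy. move=> h.
have hp : 0 <= x + /2 by lra.
have h2 := Rmult_le_compat_l _ _ _ hp h.
apply: Rle_trans h2 _.
have -> : (x + / 2) * (/ x - (/ x) ^ 2 / 2 + (/ x) ^ 3 / 3) = 1 + (x + 2) / (12 * x^3) by field; repeat split; nra.
have -> : 3 / 16 * (/ (x - / 2) - / (x + / 2)) = 3 / (16 * x^2 - 4) by field; repeat split; nra.
apply Rplus_le_compat_l.
have hx3 : 0 < 12 * x^3 by nra.
have hx2 : 0 < 16 * x^2 - 4 by nra.
apply (Rmult_le_reg_r (12 * x^3 * (16 * x^2 - 4))). nra.
have -> : (x + 2) / (12 * x ^ 3) * (12 * x ^ 3 * (16 * x ^ 2 - 4)) = (x+2) * (16 * x^2 - 4) by field; repeat split; nra.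
have -> : 3 / (16 * x ^ 2 - 4) * (12 * x ^ 3 * (16 * x ^ 2 - 4)) = 36 * x^3 by field; repeat split; nra.
have : 0 <= (x - 1) * (x - 1) * (5 * x + 2) by apply Rmult_le_pos; nra.
nra.
Qed.

Lemma bb1 : bb 1 = 1.
Proof. rewrite /bb /= Rplus_0_l ln_1. ring. Qed.

Lemma bb_dec c : (1 <= c)%nat -> bb c.+1 <= bb c.
Proof. move=> Hc. have := bb_step Hc. have := e_ge1 Hc. lra. Qed.

Lemma bb_le1 c : (1 <= c)%nat -> bb c <= 1.
Proof.
elim: c => [//|c IH] _. case: c IH => [|c] IH; first by rewrite bb1; lra.
have := bb_dec (c:=c.+1) erefl. have := IH erefl. lra.
Qed.

Definition gb (c : nat) : R := bb c - 3/16 * / (INR c - /2).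

Lemma gb_inc c : (1 <= c)%nat -> gb c <= gb c.+1.
Proof.
move=> Hc. have := bb_step Hc. have := e_le Hc. rewrite /gb S_INR.
have -> : INR c + 1 - /2 = INR c + /2 by field. lra.
Qed.

Lemma gb_mono c k : (1 <= c)%nat -> gb c <= gb (c + k).
Proof.
move=> Hc. elim: k => [|k IH]; first by rewrite addn0; lra.
rewrite addnS. apply: Rle_trans IH (gb_inc _). by rewrite (leq_trans Hc) ?leq_addr.
Qed.

Lemma bb_ge c : (1 <= c)%nat -> 5/8 <= bb c.
Proof.
move=> Hc. have := gb_mono (c:=1) (c.-1) erefl. rewrite add1n prednK //.
rewrite /gb bb1 /=. have H1 := INR_ge1 Hc.
have : 0 <= 3/16 * / (INR c - /2).
  apply Rmult_le_pos; first lra. apply Rlt_le, Rinv_0_lt_compat; lra.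
have -> : / (1 - /2) = 2 by field. lra.
Qed.

Lemma bb_double c : (1 <= c)%nat -> bb c - bb (c + c) <= 1/4.
Proof.
move=> Hc. have := gb_mono c Hc. rewrite /gb plus_INR.
have H1 := INR_ge1 Hc. remember (INR c) as x eqn:Ex.
have h : 3/16 * / (x - /2) - 3/16 * / (x + x - /2) <= 1/4.
  have -> : 3/16 * / (x - /2) - 3/16 * / (x + x - /2) = 3/16 * (4 * x / ((2*x - 1) * (4 * x - 1))) by field; repeat split; nra.
  apply (Rmult_le_reg_r ((2*x - 1) * (4 * x - 1))). nra.
  have -> : 3 / 16 * (4 * x / ((2 * x - 1) * (4 * x - 1))) * ((2 * x - 1) * (4 * x - 1)) = 3/4 * x by field; repeat split; nra.
  nra.
lra.
Qed.

Lemma reg1_real m d : 1 <= m -> 0 <= d ->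
  ln (m + d + m / ln ((m + d + 1) / m)) - ln (m + d) <= ln (2*m + 2*d + 1) - ln (2*d + 1).
Proof.
move=> Hm Hd.
have hy : 0 <= (d + 1) / m by apply Rcomplements.Rdiv_le_0_compat; lra.
have hL := ln1p_ge2 ((d+1)/m) hy.
have e1 : 1 + (d + 1) / m = (m + d + 1) / m by field; lra.
have e2 : 2 * ((d + 1) / m) / (2 + (d + 1) / m) = 2 * (d+1) / (2*m + d + 1) by field; lra.
rewrite e1 e2 in hL.
set L := ln ((m + d + 1) / m) in hL *.
have hL0 : 0 < 2 * (d+1) / (2*m + d + 1) by apply Rdiv_lt_0_compat; lra.
have hLp : 0 < L by lra.
have hb : m / L <= m * (2*m + d + 1) / (2 * (d + 1)).
  apply (Rmult_le_reg_r L) => //.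
  have -> : m / L * L = m by field; lra.
  have h1 : m * (2 * m + d + 1) / (2 * (d + 1)) * (2 * (d + 1) / (2 * m + d + 1)) = m by field; lra.
  have h2 : 0 <= m * (2 * m + d + 1) / (2 * (d + 1)).
    apply Rcomplements.Rdiv_le_0_compat; nra.
  nra.
have hb2 : m * (2*m + d + 1) / (2 * (d + 1)) <= (m + d) * (2 * m / (2 * d + 1)).
  have -> : m * (2*m + d + 1) / (2 * (d + 1)) = (m * (2*m + d + 1) * (2*d+1)) / (2 * (d + 1) * (2*d+1)) by field; lra.
  have -> : (m + d) * (2 * m / (2 * d + 1)) = (m + d) * 2 * m * (2 * (d+1)) / (2 * (d + 1) * (2*d+1)) by field; lra.
  apply Rmult_le_compat_r. apply Rlt_le, Rinv_0_lt_compat; nra.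
  nra.
have hbp : 0 < m / L by apply Rdiv_lt_0_compat; lra.
have e : ln (2 * m + 2 * d + 1) - ln (2 * d + 1) = ln ((m + d) * (1 + 2 * m / (2 * d + 1))) - ln (m + d).
  rewrite ln_mult; [|lra|]. rewrite -Rcomplements.ln_div; [|lra|lra].
  have -> : (2 * m + 2 * d + 1) / (2 * d + 1) = 1 + 2 * m / (2 * d + 1) by field; lra. ring.
  have : 0 <= 2 * m / (2 * d + 1) by apply Rcomplements.Rdiv_le_0_compat; lra. lra.
rewrite e. apply Rplus_le_compat_r. apply Rcomplements.ln_le. lra. nra.
Qed.

Lemma inv_le_frac p q c : 0 < p -> 0 < q -> q <= c * p -> / p <= c / q.
Proof.
move=> Hp Hq H.
have -> : c / q = / p + (c * p - q) / (p * q) by field; lra.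
have : 0 <= (c * p - q) / (p * q) by apply Rcomplements.Rdiv_le_0_compat; nra.
lra.
Qed.

Lemma reg2_real m s : 1 <= m -> 7 * m <= s + 1 -> 6 <= s ->
  ln (s + m / ln ((s + 1) / m)) - ln s <=
  3/2 * m * (ln (ln (2 * (s + 1) / m)) - ln (ln (2 * s / m))).
Proof.
move=> Hm Hs Hs6.
have l2 := ln2_lo. have l72 := ln7_ge_2ln2.
have hy : 7 <= (s + 1) / m.
  apply (Rmult_le_reg_r m); first lra. have -> : (s + 1) / m * m = s + 1 by field; lra. lra.
have hL : ln 7 <= ln ((s + 1) / m) by apply Rcomplements.ln_le; lra.
set L := ln ((s + 1) / m) in hL *.
have hLp : 0 < L by lra.
have hbp : 0 < m / L by apply Rdiv_lt_0_compat; lra.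
have h1 : ln (s + m / L) - ln s <= m / L / s.
  rewrite -Rcomplements.ln_div; [|lra|lra].
  have -> : (s + m / L) / s = 1 + m / L / s by field; lra.
  apply ln1p_le. have : 0 < m / L / s by apply Rdiv_lt_0_compat; lra. lra.
have hA : 12 <= 2 * s / m.
  apply (Rmult_le_reg_r m); first lra. have -> : 2 * s / m * m = 2 * s by field; lra. lra.
have hA0 : 0 < ln (2 * s / m).
  have : ln 1 < ln (2 * s / m) by apply ln_increasing; lra.
  rewrite ln_1. lra.
set A := ln (2 * s / m) in hA0 *.
have eB : ln (2 * (s + 1) / m) = ln 2 + L.
  rewrite /L -ln_mult; [f_equal; field; lra|lra|]. apply Rdiv_lt_0_compat; lra.
rewrite eB.
have eBA : ln 2 + L - A = ln (1 + / s).
  rewrite /L /A -ln_mult; [|lra|apply Rdiv_lt_0_compat; lra].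
  rewrite -Rcomplements.ln_div; [|apply Rmult_lt_0_compat; [lra|apply Rdiv_lt_0_compat; lra]|apply Rdiv_lt_0_compat; lra].
  f_equal. field. lra.
have hBA : 2 / (2 * s + 1) <= ln 2 + L - A.
  rewrite eBA. have := ln1p_ge2 (/ s) ltac:(have := Rinv_0_lt_compat s ltac:(lra); lra).
  have -> : 2 * / s / (2 + / s) = 2 / (2 * s + 1) by field; lra. done.
have hB : 0 < ln 2 + L by lra.
have hlog : (ln 2 + L - A) / (ln 2 + L) <= ln (ln 2 + L) - ln A.
  have := ln_ge_1sub ((ln 2 + L) / A) ltac:(apply Rdiv_lt_0_compat; lra).
  rewrite Rcomplements.ln_div; [|lra|lra].
  have -> : 1 - / ((ln 2 + L) / A) = (ln 2 + L - A) / (ln 2 + L) by field; lra. done.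
apply: Rle_trans h1 _.
have hq : 2 / (2 * s + 1) / (ln 2 + L) <= (ln 2 + L - A) / (ln 2 + L).
  apply Rmult_le_compat_r; [apply Rlt_le, Rinv_0_lt_compat; lra | lra].
have hk2 : m / L / s <= 3/2 * m * (2 / (2 * s + 1) / (ln 2 + L)).
  have -> : m / L / s = m * (/ (L * s)) by field; lra.
  have -> : 3/2 * m * (2 / (2 * s + 1) / (ln 2 + L)) = m * (3 / ((2 * s + 1) * (ln 2 + L))) by field; lra.
  apply Rmult_le_compat_l; first lra.
  apply inv_le_frac. nra. nra.
  have : (2 * s + 1) * ln 2 <= (s - 1) * L.
    have : (s - 1) * (14/5 * ln 2) <= (s - 1) * L by apply Rmult_le_compat_l; lra.
    nra.
  nra.
have h3 : 3/2 * m * (2 / (2 * s + 1) / (ln 2 + L)) <= 3/2 * m * (ln (ln 2 + L) - ln A).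
  apply Rmult_le_compat_l; lra.
lra.
Qed.

Lemma INR_add m n : INR (m + n)%nat = INR m + INR n.
Proof. exact: plus_INR. Qed.
Lemma INR_mul m n : INR (m * n)%nat = INR m * INR n.
Proof. exact: mult_INR. Qed.
Lemma INR_sub m n : (n <= m)%nat -> INR (m - n)%nat = INR m - INR n.
Proof. move=> H. apply: minus_INR. by apply/leP. Qed.

Definition betaf (t k : nat) : R := INR k / ln (INR t.+1 / INR k).
Definition rr (t k : nat) : R := ln (INR t + betaf t k) - ln (INR t).
Definition nn (t k : nat) : R := - ln (betaf t k).
Fixpoint PP (k : nat) : R :=
  match k with 0%nat => 0 | S k' => PP k' + (match k' with 0%nat => 0 | _ => rr k' k' + nn k' k' end) end.
Fixpoint TT (k d : nat) : R :=
  match d with 0%nat => 0 | S d' => TT k d' + rr (k + d') k end.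
Definition WW (t k : nat) : R := PP k + TT k (t - k).
Fixpoint OS (m J : nat) : R :=
  match J with 0%nat => 0 | S J' => OS m J' + (ln (2 * INR m + 2 * INR J' + 1) - ln (2 * INR J' + 1)) end.

Lemma TT_le_OS m J : (1 <= m)%nat -> TT m J <= OS m J.
Proof.
move=> Hm. have H1 := INR_ge1 Hm.
elim: J => [|J IH] /=; first lra.
apply Rplus_le_compat => //.
rewrite /rr /betaf S_INR !INR_add.
apply: reg1_real => //. exact: pos_INR.
Qed.

Lemma OS_S m J : OS m J.+1 = OS m J + (ln (2 * INR m + 2 * INR J + 1) - ln (2 * INR J + 1)).
Proof. by []. Qed.

Lemma lf_S n : lf n.+1 = lf n + ln (INR n.+1).
Proof. by []. Qed.

Lemma lf_SS n : lf n.+2 = lf n + ln (INR n.+1) + ln (INR n.+2).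
Proof. by []. Qed.

Lemma ln_2x x : 0 < x -> ln (2 * x) = ln 2 + ln x.
Proof. move=> Hx. rewrite ln_mult //; lra. Qed.

Lemma OS_lf m J : OS m J = lf (2 * (m + J)) - lf (2 * m) - lf (m + J) + lf m - lf (2 * J) + lf J.
Proof.
elim: J => [|J IH]; first by rewrite addn0 /=; ring.
have -> : (2 * (m + J.+1) = (2 * (m + J)).+2)%nat by rewrite addnS mulnS add2n.
have -> : (2 * J.+1 = (2 * J).+2)%nat by rewrite mulnS add2n.
rewrite OS_S addnS !lf_SS (lf_S (m + J)) (lf_S J) IH.
have hm := pos_INR m. have hJ := pos_INR J.
rewrite !S_INR !INR_mul !INR_add.
have -> : (INR 2 = 2) by [].
have -> : 2 * (INR m + INR J) + 1 + 1 = 2 * (INR m + INR J + 1) by ring.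
have -> : 2 * INR J + 1 + 1 = 2 * (INR J + 1) by ring.
rewrite !ln_2x; try lra.
have -> : 2 * (INR m + INR J) + 1 = 2 * INR m + 2 * INR J + 1 by ring.
ring.
Qed.

Lemma bb_mono c k : (1 <= c)%nat -> bb (c + k) <= bb c.
Proof.
move=> Hc. elim: k => [|k IH]; first by rewrite addn0; lra.
rewrite addnS. apply: Rle_trans (bb_dec _) IH. by rewrite (leq_trans Hc) ?leq_addr.
Qed.

Lemma lf_bb c : lf c = bb c + INR c * ln (INR c) - INR c + / 2 * ln (INR c).
Proof. rewrite /bb. ring. Qed.

Lemma OS_bound m J : (1 <= m)%nat -> OS m J <= INR m * (1 + ln (1 + INR J / INR m)) + 1/2.
Proof.
move=> Hm. have HM := INR_ge1 Hm.
case: J => [|J].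
  rewrite /= Rdiv_0_l Rplus_0_r ln_1. lra.
set J' := J.+1. have HJ : (1 <= J')%nat by [].
have HJr := INR_ge1 HJ.
rewrite OS_lf.
have d1 := @bb_mono (m + J') (m + J') ltac:(by rewrite (leq_trans Hm) ?leq_addr).
have d2 := bb_double Hm. have d3 := bb_double HJ.
rewrite !mul2n -!addnn.
rewrite !(lf_bb (_ + _)) !(lf_bb m) !(lf_bb J').
rewrite !INR_add.
set M := INR m in HM d1 d2 d3 *. set Jr := INR J' in HJr d1 d2 d3 *.
have e1 : ln (M + Jr + (M + Jr)) = ln 2 + ln (M + Jr) by rewrite -ln_2x; [f_equal; ring|lra].
have e2 : ln (M + M) = ln 2 + ln M by rewrite -ln_2x; [f_equal; ring|lra].
have e3 : ln (Jr + Jr) = ln 2 + ln Jr by rewrite -ln_2x; [f_equal; ring|lra].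
rewrite e1 e2 e3.
have hl1 : ln (M + Jr) - ln Jr <= M / Jr.
  rewrite -Rcomplements.ln_div; [|lra|lra].
  have -> : (M + Jr) / Jr = 1 + M / Jr by field; lra.
  apply ln1p_le. have : 0 < M / Jr by apply Rdiv_lt_0_compat; lra. lra.
have hl1' : Jr * (ln (M + Jr) - ln Jr) <= M.
  have := Rmult_le_compat_l Jr _ _ ltac:(lra) hl1.
  have -> : Jr * (M / Jr) = M by field; lra. done.
have hl2 : ln (M + Jr) - ln M = ln (1 + Jr / M).
  rewrite -Rcomplements.ln_div; [|lra|lra]. f_equal. field. lra.
have hln2 : 0 <= ln 2 by have := ln2_lo; lra.
have hbb : bb (m + J' + (m + J')) - bb (m + J') <= 0 by lra.
have hmain : M * (1 + ln (1 + Jr / M)) = M + M * (ln (M + Jr) - ln M) by rewrite hl2; ring.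
rewrite hmain.
nra.
Qed.

Definition Qf (m s : nat) : R := 3/2 * INR m * ln (ln (2 * INR s / INR m)).
Definition Bud (m J : nat) : R :=
  Qf m (m + J) + 1955/1000 * INR m + 485/1000 - / 2 * ln (INR m).

Lemma TT_S m d : TT m d.+1 = TT m d + rr (m + d) m.
Proof. by []. Qed.

Lemma TT_reg2 m D k : (1 <= m)%nat -> (7 * m <= m + D + 1)%nat ->
  TT m (D + k) <= TT m D + Qf m (m + (D + k)) - Qf m (m + D).
Proof.
move=> Hm HD. have HM := INR_ge1 Hm.
elim: k => [|k IH]; first by rewrite addn0; lra.
rewrite addnS TT_S.
have h7 : 7 * INR m <= INR (m + (D + k)) + 1.
  have : (7 * m <= m + (D + k) + 1)%nat.
    apply: (leq_trans HD). by rewrite leq_add2r leq_add2l leq_addr.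
  move/leP/le_INR => h. rewrite INR_mul !INR_add in h. simpl in h. rewrite !INR_add. lra.
have h6 : 6 <= INR (m + (D + k)) by rewrite !INR_add; rewrite !INR_add in h7; lra.
have := reg2_real HM h7 h6.
rewrite /rr /betaf S_INR /Qf addnS S_INR.
rewrite /Qf in IH. lra.
Qed.

Lemma OS_Bud m J : (1 <= m)%nat -> (J <= 6 * m)%nat ->
  INR m * (1 + ln (1 + INR J / INR m)) + 1/2 <= Bud m J.
Proof.
move=> Hm HJ. have HM := INR_ge1 Hm.
have hJ0 := pos_INR J.
have hJ6 : INR J <= 6 * INR m.
  move/leP/le_INR: HJ. rewrite INR_mul. simpl. lra.
have hth : 0 <= INR J / INR m <= 6.
  split; first by apply Rcomplements.Rdiv_le_0_compat; lra.
  apply (Rmult_le_reg_r (INR m)); first lra. have -> : INR J / INR m * INR m = INR J by field; lra. lra.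
have := budget1D (INR m) (INR J / INR m) HM hth.
rewrite /Bud /Qf INR_add.
have -> : 2 * (INR m + INR J) / INR m = 2 + 2 * (INR J / INR m) by field; lra.
lra.
Qed.

Lemma TT_bound m J : (1 <= m)%nat -> TT m J <= Bud m J.
Proof.
move=> Hm.
case: (leqP J (6 * m - 1)) => HJ.
  apply: Rle_trans (TT_le_OS J Hm) _.
  apply: Rle_trans (OS_bound J Hm) _.
  apply OS_Bud => //. apply: (leq_trans HJ). exact: leq_subr.
have HD : (7 * m <= m + (6 * m - 1) + 1)%nat.
  rewrite -addnA subnK; last by rewrite muln_gt0.
  by rewrite -{1}(add1n 6) mulnDl mul1n.
have [k ->] : exists k, J = (6 * m - 1 + k)%nat.
  exists (J - (6 * m - 1))%nat. by rewrite subnKC // ltnW.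
have := TT_reg2 k Hm HD.
have := TT_le_OS (6 * m - 1) Hm.
have := OS_bound (6 * m - 1) Hm.
have := OS_Bud Hm (leq_subr 1 (6 * m)).
rewrite /Bud. lra.
Qed.

Lemma Lpos T K : 1 <= K -> K < T -> 0 < ln (T / K).
Proof.
move=> HK HT. have : ln 1 < ln (T / K).
  apply ln_increasing; first lra.
  apply (Rmult_lt_reg_r K); first lra. have -> : T / K * K = T by field; lra. lra.
rewrite ln_1. lra.
Qed.

Lemma swap_real T K : 1 <= K -> K <= T ->
  ln (T + 1 + K / ln ((T + 2) / K)) - ln (T + 1) - ln (K / ln ((T + 2) / K)) <=
  ln (T + 1 + (K + 1) / ln ((T + 2) / (K + 1))) - ln (T + 1) - ln (K / ln ((T + 1) / K)).
Proof.
move=> HK HT.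
have hL := Lpos (T := T + 1) HK ltac:(lra).
have hL' := Lpos (T := T + 2) HK ltac:(lra).
have hL'' := Lpos (T := T + 2) (K := K + 1) ltac:(lra) ltac:(lra).
set L := ln ((T + 1) / K) in hL *. set L' := ln ((T + 2) / K) in hL' *.
set L'' := ln ((T + 2) / (K + 1)) in hL'' *.
have hLL'' : L'' <= L.
  rewrite /L /L''. apply Rcomplements.ln_le. apply Rdiv_lt_0_compat; lra.
  apply (Rmult_le_reg_r (K * (K + 1))). nra.
  have -> : (T + 2) / (K + 1) * (K * (K + 1)) = (T + 2) * K by field; lra.
  have -> : (T + 1) / K * (K * (K + 1)) = (T + 1) * (K + 1) by field; lra.
  nra.
have hL'L : L' - L <= / (T + 1).
  rewrite /L /L' -Rcomplements.ln_div; [|apply Rdiv_lt_0_compat; lra|apply Rdiv_lt_0_compat; lra].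
  have -> : (T + 2) / K / ((T + 1) / K) = 1 + / (T + 1) by field; lra.
  apply ln1p_le. have := Rinv_0_lt_compat (T + 1) ltac:(lra). lra.
have eR : ln (T + 1 + K / L') - ln (T + 1) - ln (K / L') = ln (((T + 1) * L' + K) / K) - ln (T + 1).
  have hp : 0 < (T + 1) * L' + K by nra.
  rewrite (Rcomplements.ln_div K L'); [|lra|lra].
  rewrite (Rcomplements.ln_div _ K); [|lra|lra].
  have -> : T + 1 + K / L' = ((T + 1) * L' + K) / L' by field; lra.
  rewrite Rcomplements.ln_div; [|lra|lra]. ring.
have eL : ln (T + 1 + (K + 1) / L'') - ln (T + 1) - ln (K / L) =
          ln ((T + 1 + (K + 1) / L'') * L / K) - ln (T + 1).
  have h1 : 0 < T + 1 + (K + 1) / L'' by have := Rdiv_lt_0_compat (K+1) L'' ltac:(lra) hL''; lra.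
  rewrite (Rcomplements.ln_div K L); [|lra|lra].
  rewrite (Rcomplements.ln_div _ K); [|nra|lra].
  rewrite ln_mult; [|lra|lra]. ring.
rewrite eR eL. apply Rplus_le_compat_r.
apply Rcomplements.ln_le. apply Rdiv_lt_0_compat; nra.
apply Rmult_le_compat_r. apply Rlt_le, Rinv_0_lt_compat; lra.
have hq : K + 1 <= (K + 1) / L'' * L.
  apply (Rmult_le_reg_r L''); first lra.
  have -> : (K + 1) / L'' * L * L'' = (K + 1) * L by field; lra.
  nra.
have : (T + 1) * (L' - L) <= 1.
  have := Rmult_le_compat_l (T + 1) _ _ ltac:(lra) hL'L.
  have -> : (T + 1) * / (T + 1) = 1 by field; lra. done.
nra.
Qed.

Lemma swap_nat t k : (1 <= k)%nat -> (k <= t)%nat ->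
  rr t.+1 k + nn t.+1 k - nn t k <= rr t.+1 k.+1.
Proof.
move=> Hk Hkt. have HK := INR_ge1 Hk.
have HT : INR k <= INR t by apply le_INR; apply/leP.
have := swap_real HK HT.
have e2 : INR t.+2 = INR t + 2 by rewrite !S_INR; ring.
rewrite /rr /nn /betaf e2 !S_INR. lra.
Qed.

Lemma PP_S k : (1 <= k)%nat -> PP k.+1 = PP k + rr k k + nn k k.
Proof. by case: k => [//|k] _ /=; ring. Qed.

Lemma WW1 t k : (1 <= k)%nat -> (k <= t)%nat -> WW t.+1 k = WW t k + rr t k.
Proof.
move=> Hk Hkt. rewrite /WW subSn // TT_S subnKC //. ring.
Qed.

Lemma WW2 t k : (1 <= k)%nat -> (k <= t)%nat -> WW t k + rr t k + nn t k <= WW t.+1 k.+1.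
Proof.
move=> Hk Hkt. rewrite /WW subSS PP_S //.
have [d ->] : exists d, t = (k + d)%nat by exists (t - k)%nat; rewrite subnKC.
rewrite addKn. elim: d => [|d IH]; first by rewrite addn0 /=; lra.
rewrite !TT_S.
have := swap_nat (t := k + d) Hk (leq_addr _ _).
rewrite !addnS !addSn. lra.
Qed.

Lemma PP_bound k : (1 <= k)%nat -> PP k <= 2 * ln (INR k) - lf k.
Proof.
elim: k => [//|k IH] _. case: k IH => [|k] IH.
  rewrite /= Rplus_0_l ln_1. lra.
rewrite PP_S // lf_S.
have HK := INR_ge1 (c := k.+1) erefl.
have IH' := IH erefl.
set K := INR k.+1 in HK IH' *.
rewrite /rr /nn /betaf -/K S_INR -/K.
have hL := Lpos (T := K + 1) HK ltac:(lra).
set L := ln ((K + 1) / K) in hL *.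
have hb : 0 < K / L by apply Rdiv_lt_0_compat; lra.
have e : ln (K + K / L) - ln K + - ln (K / L) = ln (L + 1) - ln K.
  rewrite (Rcomplements.ln_div K L); [|lra|lra].
  have -> : K + K / L = K * (L + 1) / L by field; lra.
  rewrite Rcomplements.ln_div; [|nra|lra]. rewrite ln_mult; [|lra|lra]. ring.
have hl : ln (L + 1) <= L by have := ln1p_le L ltac:(lra); rewrite Rplus_comm.
have eL : L = ln (K + 1) - ln K by rewrite /L Rcomplements.ln_div; lra.
lra.
Qed.

HB.instance Definition _ := Monoid.isComLaw.Build R 0 Rplus
  (fun a b c => esym (Rplus_assoc a b c)) Rplus_comm Rplus_0_l.

Lemma sumR_big (T : Type) (f : T -> R) l : sumR (map f l) = \big[Rplus/0]_(i <- l) f i.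
Proof. elim: l => [|a l IH] /=; [by rewrite big_nil | by rewrite big_cons IH]. Qed.

Lemma sumR_perm (T : eqType) (f : T -> R) l1 l2 :
  perm_eq l1 l2 -> sumR (map f l1) = sumR (map f l2).
Proof. move=> H; rewrite !sumR_big; exact: perm_big. Qed.

Lemma sumR_rcons l a : sumR (rcons l a) = sumR l + a.
Proof. elim: l => [|b l IH] /=; [ring | rewrite IH; ring]. Qed.

Lemma prodR_rcons l a : prodR (rcons l a) = prodR l * a.
Proof. elim: l => [|b l IH] /=; [ring | rewrite IH; ring]. Qed.

Lemma sumR_upd (T : eqType) (l : seq T) (f g : T -> R) x :
  uniq l -> x \in l -> (forall j, j != x -> g j = f j) ->
  sumR (map g l) = sumR (map f l) + (g x - f x).
Proof.
elim: l => [//|a l IH] /= /andP[anl ul]. rewrite in_cons => /orP[/eqP ->|xl] H.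
  have -> : sumR (map g l) = sumR (map f l).
    congr sumR. apply/eq_in_map => j jl. apply: H. apply/eqP => ej.
    move: anl. by rewrite -ej jl.
  ring.
have ax : a != x by apply/eqP => ea; move: anl; rewrite ea xl.
rewrite (IH ul xl H) (H a ax). ring.
Qed.

Lemma sumR_ge (T : Type) (l : seq T) (f : T -> R) c :
  (forall j, f j >= c) -> sumR (map f l) >= INR (size l) * c.
Proof.
move=> H. elim: l => [|a l IH]; first by rewrite /=; lra.
have -> : size (a :: l) = (size l).+1 by [].
have -> : sumR (map f (a :: l)) = f a + sumR (map f l) by [].
rewrite S_INR. have := H a. lra.
Qed.

Lemma ln_prodR l : (forall y, List.In y l -> 0 < y) -> ln (prodR l) = sumR (map ln l) /\ 0 < prodR l.
Proof.
elim: l => [|a l IH] H /=; first by rewrite ln_1; split; lra.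
have Ha : 0 < a by apply: H; left.
have [e p] : ln (prodR l) = sumR (map ln l) /\ 0 < prodR l.
  apply: IH => y yl. apply: H. by right.
split; last by apply Rmult_lt_0_compat.
rewrite ln_mult // e. ring.
Qed.

Section Comb.
Variable X : finType.

Lemma prefix_pairs_rcons (pre s : seq X) x :
  prefix_pairs pre (rcons s x) = rcons (prefix_pairs pre s) (pre ++ s, x).
Proof.
elim: s pre => [|a s IH] pre /=; first by rewrite cats0.
by rewrite IH cat_rcons.
Qed.

Lemma cnt_rcons (s : seq X) x j : cnt (rcons s x) j = (cnt s j + (x == j))%nat.
Proof. rewrite /cnt -cats1 count_cat /=. by rewrite addn0 eq_sym. Qed.

Lemma cnt_gt0 (s : seq X) j : j \in s -> (1 <= cnt s j)%nat.
Proof. move=> H. rewrite /cnt. by rewrite -has_count has_pred1. Qed.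

Lemma sumR_undup_rcons (f : nat -> R) (s : seq X) x :
  sumR [seq f (cnt (rcons s x) j) | j <- undup (rcons s x)] =
  sumR [seq f (cnt s j) | j <- undup s] +
  (if x \in s then f (cnt s x).+1 - f (cnt s x) else f 1%nat).
Proof.
case: ifP => xs.
  have P : perm_eq (undup (rcons s x)) (undup s).
    apply: uniq_perm; try exact: undup_uniq.
    move=> y. rewrite !mem_undup mem_rcons in_cons. case: eqP => // ->. by rewrite xs.
  rewrite (sumR_perm _ P).
  rewrite (@sumR_upd _ _ (fun j => f (cnt s j)) (fun j => f (cnt (rcons s x) j)) x).
  - by rewrite cnt_rcons eqxx addn1.
  - exact: undup_uniq.
  - by rewrite mem_undup.
  - move=> j jx. rewrite cnt_rcons. by rewrite eq_sym (negbTE jx) addn0.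
have P : perm_eq (undup (rcons s x)) (rcons (undup s) x).
  apply: uniq_perm; first exact: undup_uniq.
    rewrite rcons_uniq undup_uniq mem_undup xs //.
  move=> y. by rewrite mem_undup !mem_rcons !in_cons mem_undup.
rewrite (sumR_perm _ P) map_rcons sumR_rcons.
have -> : cnt (rcons s x) x = 1%nat.
  rewrite cnt_rcons eqxx. have /count_memPn : x \notin s by rewrite xs. by rewrite /cnt => ->.
congr (_ + _). congr sumR. apply/eq_in_map => j. rewrite mem_undup => js.
rewrite cnt_rcons. have -> : (x == j) = false. apply/eqP => e. move: xs. by rewrite e js.
by rewrite addn0.
Qed.

Lemma size_undup_rcons (s : seq X) x :
  size (undup (rcons s x)) = (size (undup s) + (x \notin s))%nat.
Proof.
case: (boolP (x \in s)) => xs /=.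
  have P : perm_eq (undup (rcons s x)) (undup s).
    apply: uniq_perm; try exact: undup_uniq.
    move=> y. rewrite !mem_undup mem_rcons in_cons. case: eqP => // ->. by rewrite xs.
  by rewrite (perm_size P) addn0.
have P : perm_eq (undup (rcons s x)) (rcons (undup s) x).
  apply: uniq_perm; first exact: undup_uniq.
    rewrite rcons_uniq undup_uniq mem_undup xs //.
  move=> y. by rewrite mem_undup !mem_rcons !in_cons mem_undup.
by rewrite (perm_size P) size_rcons addn1.
Qed.

End Comb.

Lemma ln_prodR_map (T : eqType) (l : seq T) (g : T -> R) :
  (forall j, j \in l -> 0 < g j) ->
  ln (prodR (map g l)) = sumR (map (fun j => ln (g j)) l) /\ 0 < prodR (map g l).
Proof.
elim: l => [|a l IH] H /=; first by rewrite ln_1; split; lra.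
have Ha : 0 < g a by apply: H; rewrite in_cons eqxx.
have [e p] : ln (prodR (map g l)) = sumR (map (fun j => ln (g j)) l) /\ 0 < prodR (map g l).
  apply: IH => y yl. apply: H. by rewrite in_cons yl orbT.
split; last by apply Rmult_lt_0_compat.
rewrite ln_mult // e. ring.
Qed.

Section Model2.
Variable X : finType.
Variables (u : X -> R) (v : nat -> R) (beta0 : R).
Hypothesis hu : forall i, 0 < u i.
Hypothesis hv : forall k, 0 < v k.
Hypothesis hb0 : 0 < beta0.

Lemma weight_pos (s : seq X) x : 0 < weight u v s x.
Proof. rewrite /weight. exact: Rmult_lt_0_compat. Qed.

Lemma msize_ge1 (s : seq X) : (1 <= size s)%nat -> (1 <= msize s)%nat.
Proof.
case: s => [//|a s] _. have : a \in undup (a :: s) by rewrite mem_undup mem_head.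
rewrite /msize lt0n size_eq0. by case: (undup (a :: s)).
Qed.

Lemma msize_le (s : seq X) : (msize s <= size s)%nat.
Proof. exact: size_undup. Qed.

Lemma beta_star_eq (s : seq X) : (1 <= size s)%nat ->
  beta_star beta0 s = betaf (size s) (msize s).
Proof. rewrite /beta_star /betaf. by case: (size s). Qed.

Lemma betaf_pos t k : (1 <= k)%nat -> (k <= t)%nat -> 0 < betaf t k.
Proof.
move=> Hk Hkt. have HK := INR_ge1 Hk.
have HT : INR k < INR t.+1 by apply lt_INR; apply/ltP.
have := Lpos HK HT. rewrite /betaf => h. apply Rdiv_lt_0_compat; lra.
Qed.

Lemma S_cond_pos (s : seq X) x : 0 < S_cond u v beta0 s x.
Proof.
rewrite /S_cond. case: (leqP 1 (size s)) => Hs.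
  have Hb := betaf_pos (msize_ge1 Hs) (msize_le s).
  rewrite beta_star_eq //.
  have ht : 0 < INR (size s) + betaf (size s) (msize s).
    have := pos_INR (size s). lra.
  case: ifP => hc.
    apply Rdiv_lt_0_compat => //. have := INR_ge1 hc. lra.
  apply Rdiv_lt_0_compat => //. apply Rmult_lt_0_compat => //. exact: weight_pos.
move: Hs. rewrite ltnS leqn0 => /eqP Hs.
rewrite /beta_star Hs /= /cnt.
have -> : count_mem x s = 0%nat by case: s Hs.
apply Rdiv_lt_0_compat; first (apply Rmult_lt_0_compat => //; exact: weight_pos).
lra.
Qed.

Lemma S_prob_rcons (s : seq X) x :
  S_prob u v beta0 (rcons s x) = S_prob u v beta0 s * S_cond u v beta0 s x.
Proof. by rewrite /S_prob prefix_pairs_rcons map_rcons prodR_rcons. Qed.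

Lemma S_prob_pos (s : seq X) : 0 < S_prob u v beta0 s.
Proof.
elim/last_ind: s => [|s x IH]; first by rewrite /S_prob /=; lra.
rewrite S_prob_rcons. apply Rmult_lt_0_compat => //. exact: S_cond_pos.
Qed.

Lemma CL_rcons (s : seq X) x :
  CL u v (rcons s x) = CL u v s + (if x \in s then 0 else ln (/ weight u v s x)).
Proof.
rewrite /CL prefix_pairs_rcons filter_rcons /=. case: (boolP (x \in s)) => xs /=.
  by rewrite Rplus_0_r.
by rewrite map_rcons sumR_rcons.
Qed.

Definition Aterm (s : seq X) : R :=
  sumR [seq INR (cnt s j) * ln (INR (cnt s j)) | j <- undup s].

Lemma red_decomp (s : seq X) : (1 <= size s)%nat ->
  redundancy u v beta0 s =
  Aterm s - INR (size s) * ln (INR (size s)) - ln (S_prob u v beta0 s).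
Proof.
move=> Hs. rewrite /redundancy.
have hn := INR_ge1 Hs.
have [e p] := @ln_prodR_map _ (undup s) (fun j => INR (cnt s j) ^ cnt s j)
  ltac:(move=> j; rewrite mem_undup => /cnt_gt0 /INR_ge1 h; apply pow_lt; lra).
rewrite Rcomplements.ln_div //; last by apply pow_lt; lra.
rewrite e ln_pow; last lra.
congr (_ - _ - _). rewrite /Aterm. congr sumR. apply/eq_in_map => j.
rewrite mem_undup => /cnt_gt0 /INR_ge1 h. rewrite ln_pow //. lra.
Qed.
End Model2.

Section Inv.
Variable X : finType.
Variables (u : X -> R) (v : nat -> R) (beta0 : R).
Hypothesis hu : forall i, 0 < u i.
Hypothesis hv : forall k, 0 < v k.
Hypothesis hb0 : 0 < beta0.

Definition RHSinv (s : seq X) : R :=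
  sumR [seq / 2 * ln (INR (cnt s j)) | j <- undup s] - / 2 * ln (INR (size s))
  + bb (size s) - sumR [seq bb (cnt s j) | j <- undup s] + WW (size s) (size (undup s)).

Definition LHSinv (s : seq X) : R :=
  Aterm s - INR (size s) * ln (INR (size s)) - ln (S_prob u v beta0 s) - CL u v s.

Lemma bb_S k : bb k.+1 = lf k + ln (INR k.+1) - INR k.+1 * ln (INR k.+1) + INR k.+1 - / 2 * ln (INR k.+1).
Proof. by rewrite /bb lf_S. Qed.

Lemma inv_step (s : seq X) x : (1 <= size s)%nat ->
  LHSinv s <= RHSinv s -> LHSinv (rcons s x) <= RHSinv (rcons s x).
Proof.
move=> Hs IH.
have Hm := msize_ge1 Hs. have Hmn := msize_le s.
have Hb := betaf_pos Hm Hmn.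
have hn := INR_ge1 Hs.
rewrite /LHSinv /RHSinv in IH *.
rewrite /Aterm (sumR_undup_rcons (fun k => INR k * ln (INR k)))
  (sumR_undup_rcons (fun k => / 2 * ln (INR k))) (sumR_undup_rcons bb).
rewrite size_rcons size_undup_rcons.
rewrite S_prob_rcons ln_mult; [|exact: S_prob_pos|exact: S_cond_pos].
rewrite CL_rcons.
rewrite /Aterm in IH.
set n := size s in Hs hn IH *.
rewrite /S_cond beta_star_eq // -/n.
set m := size (undup s) in IH *.
have em : msize s = m by [].
rewrite em in Hb *. rewrite em in Hm Hmn.
set b := betaf n m in Hb *.
have hnb : 0 < INR n + b by lra.
have eSn := S_INR n.
case: (boolP (x \in s)) => xs.
  have hc := cnt_gt0 xs. rewrite hc addn0.
  set c := cnt s x in hc *.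
  have hcr := INR_ge1 hc. have eSc := S_INR c.
  rewrite WW1 //.
  rewrite Rcomplements.ln_div; [|lra|lra].
  rewrite !bb_S. have := lf_bb n. have := lf_bb c.
  rewrite /rr -/b.
  lra.
have hc : cnt s x = 0%nat by apply/count_memPn.
rewrite hc (_ : (1 <= 0)%nat = false) //. have -> : (m + ~~ false)%nat = m.+1 by rewrite addn1.
have hw := weight_pos hu hv s x.
have W2 : WW n m + rr n m + nn n m <= WW n.+1 m.+1 by exact: WW2.
rewrite /nn -/b in W2.
rewrite Rcomplements.ln_div; [|apply Rmult_lt_0_compat; lra|lra].
rewrite ln_mult; [|lra|lra]. rewrite ln_Rinv //.
rewrite bb1 (bb_S n). have := lf_bb n. rewrite /rr -/b in W2.
have e1 : INR 1 = 1 by []. rewrite e1 ln_1.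
lra.
Qed.

Lemma inv_base x : LHSinv [:: x] <= RHSinv [:: x].
Proof.
have -> : [:: x] = rcons [::] x by [].
rewrite /LHSinv /RHSinv /Aterm (sumR_undup_rcons (fun k => INR k * ln (INR k)))
  (sumR_undup_rcons (fun k => / 2 * ln (INR k))) (sumR_undup_rcons bb).
have -> : size (undup (rcons [::] x)) = 1%nat by []. try have -> : size (rcons [::] x) = 1%nat by [].
rewrite S_prob_rcons CL_rcons.
have hw := weight_pos hu hv [::] x.
have -> : S_cond u v beta0 [::] x = weight u v [::] x.
  rewrite /S_cond /beta_star /=. field. lra.
have -> : S_prob u v beta0 [::] = 1 by [].
have -> : CL u v [::] = 0 by [].
rewrite /= Rmult_1_l ln_Rinv //.
have -> : WW 1 1 = 0 by rewrite /WW /=; ring.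
rewrite ln_1 Rmult_1_l. lra.
Qed.

Lemma inv_all (s : seq X) : (1 <= size s)%nat -> LHSinv s <= RHSinv s.
Proof.
elim/last_ind: s => [//|s x IH] _.
case: (leqP 1 (size s)) => Hs.
  apply: inv_step => //. exact: IH.
move: Hs. rewrite ltnS leqn0 size_eq0 => /eqP ->. exact: inv_base.
Qed.

End Inv.

Lemma sumR_ge_in (T : eqType) (l : seq T) (f : T -> R) c :
  (forall j, j \in l -> c <= f j) -> INR (size l) * c <= sumR (map f l).
Proof.
elim: l => [|a l IH] H; first by rewrite /=; lra.
have -> : size (a :: l) = (size l).+1 by [].
have -> : sumR (map f (a :: l)) = f a + sumR (map f l) by [].
rewrite S_INR. have := H a (mem_head _ _).
have := IH (fun j jl => H j (ltac:(by rewrite in_cons jl orbT))). lra.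
Qed.

Theorem theorem5 (X : finType) (u : X -> R) (v : nat -> R) (beta0 : R)
  (s : seq X)
  (hu : forall i, 0 < u i) (hv : forall k, 0 < v k) (hb0 : 0 < beta0)
  (hw : forall t : nat, leq t (size s) ->
     sumR [seq weight u v (take t s) k | k <- enum X & k \notin take t s] <= 1)
  (hn : leq 1 (size s)) :
  let n := size s in
  let m := size (undup s) in
  redundancy u v beta0 s <=
    CL u v s - (INR m - 1) * ln (INR m)
    + sumR [seq / 2 * ln (INR (cnt s j)) | j <- undup s]
    - / 2 * ln (INR n)
    + 3 / 2 * INR m * ln (ln (2 * INR n / INR m))
    + 233 / 100 * INR m + 86 / 100.
Proof.
move=> n m.
have Hinv := inv_all hu hv hb0 hn.
rewrite /LHSinv /RHSinv -(red_decomp u v beta0 hn) in Hinv.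
have Hm : (1 <= m)%nat := msize_ge1 hn.
have Hmn : (m <= n)%nat := msize_le s.
have hbn : bb n <= 1 := bb_le1 hn.
have hbm := bb_ge Hm.
have hsum : INR m * (5/8) <= sumR [seq bb (cnt s j) | j <- undup s].
  apply: sumR_ge_in => j. rewrite mem_undup => /cnt_gt0 h. exact: bb_ge.
have hPP := PP_bound Hm.
have hTT := TT_bound (n - m) Hm.
rewrite /Bud /Qf subnKC // in hTT.
have hlf := lf_bb m.
rewrite /WW in Hinv.
rewrite -/n -/m in Hinv.
lra.
Qed.
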